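(* There is an absolute constant $C>0$ such that for all $0<\varepsilon\leq 1$ and $0<\delta\leq1$: every finite nonempty set system $\mathcal{F}$ on a finite ground set $V$ with disjointness-ratio at least $\delta$ has an $\varepsilon$-covering of size at most $C\cdot\frac{1}{\varepsilon\delta}\ln\frac{2}{\delta}$.
   Context: Let $\mathcal{F}$ be a finite family of subsets of a finite set $V$. For $x\in V$, $\mathcal{F}_x$ is the set of members of $\mathcal{F}$ containing $x$, and $\mathcal{F}_{xy}=\mathcal{F}_x\cap\mathcal{F}_y$. For $\varepsilon\geq0$, $D_\varepsilon(x)=\{y\in V:|\mathcal{F}_{xy}|\leq\varepsilon|\mathcal{F}|\}$, $D(x)=D_0(x)$, and $D_\varepsilon(X)=\bigcup_{x\in X}D_\varepsilon(x)$. An $\varepsilon$-covering is a set $X\subseteq V$ with $D_\varepsilon(X)=V$. The disjointness-ratio of $\mathcal{F}$ is $\min_{x\in V}|D(x)|/|V|$. *)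

(* Defs.v *)
From mathcomp Require Import all_boot.
From Stdlib Require Import Reals.
Set Implicit Arguments. Unset Strict Implicit. Unset Printing Implicit Defensive.

Definition fam_x (V : finType) (F : {set {set V}}) (x : V) : {set {set V}} :=
  [set S in F | x \in S].

Definition fam_xy (V : finType) (F : {set {set V}}) (x y : V) : {set {set V}} :=
  fam_x F x :&: fam_x F y.

Definition Deps (V : finType) (F : {set {set V}}) (eps : R) (x : V) : {set V} :=
  [set y | if Rle_dec (INR #|fam_xy F x y|) (eps * INR #|F|)%R then true else false].

Definition D0 (V : finType) (F : {set {set V}}) (x : V) : {set V} := Deps F 0 x.

Definition Deps_set (V : finType) (F : {set {set V}}) (eps : R) (X : {set V}) : {set V} :=
  \bigcup_(x in X) Deps F eps x.

Definition is_eps_covering (V : finType) (F : {set {set V}}) (eps : R) (X : {set V}) : Prop :=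
  Deps_set F eps X = [set: V].

Definition disj_ratio_ge (V : finType) (F : {set {set V}}) (delta : R) : Prop :=
  forall x : V, (delta <= INR #|D0 F x| / INR #|V|)%R.

(* Main.v *)
Require Import Defs.
From mathcomp Require Import all_boot.
From Stdlib Require Import Reals.
From Stdlib Require Import ZArith Lra Classical.
From mathcomp Require Import zify.
Local Notation "m ^ n" := (expn m n) : nat_scope.
Set Implicit Arguments. Unset Strict Implicit. Unset Printing Implicit Defensive.

Lemma sum_prod_ffun (I J : finType) (f : I -> J -> nat) :
  \sum_(g : {ffun I -> J}) \prod_(i : I) f i (g i) = \prod_(i : I) \sum_(j : J) f i j.
Proof. by rewrite bigA_distr_bigA. Qed.

Lemma sum_prod_ffun_le (I J : finType) (f : I -> J -> nat) c :
  (forall i, \sum_(j : J) f i j <= c) ->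
  \sum_(g : {ffun I -> J}) \prod_(i : I) f i (g i) <= c ^ #|I|.
Proof.
move=> H; rewrite sum_prod_ffun -prod_nat_const.
by apply: leq_prod => i _; apply: H.
Qed.

Definition cnt (V : finType) k (X : {ffun 'I_k -> V}) (A : {set V}) : nat :=
  \sum_(i < k) (X i \in A).

Lemma cnt_le (V : finType) k (X : {ffun 'I_k -> V}) A : cnt X A <= k.
Proof.
rewrite /cnt -[X in _ <= X]card_ord -sum1_card.
by apply: leq_sum => i _; case: (X i \in A).
Qed.

Lemma cnt_sub (V : finType) k (X : {ffun 'I_k -> V}) (A B : {set V}) :
  A \subset B -> cnt X A <= cnt X B.
Proof.
move=> sAB; apply: leq_sum => i _.
case: (boolP (X i \in A)) => // /(subsetP sAB) ->; done.
Qed.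

Lemma cnt_compl (V : finType) k (X : {ffun 'I_k -> V}) A :
  cnt X A + \sum_(i < k) (X i \notin A) = k.
Proof.
rewrite /cnt -big_split /= -[X in _ = X]card_ord -sum1_card.
by apply: eq_bigr => i _; case: (X i \in A).
Qed.

Lemma hit_bound (V : finType) (A : {set V}) k J :
  #|[set X : {ffun 'I_k -> V} | cnt X A < J]| * 2^(k.+1)
    <= 2^J * (#|A| + 2 * #|~:A|)^k.
Proof.
have Hs : \sum_(X : {ffun 'I_k -> V}) \prod_(i < k) (if X i \in A then 1 else 2)
          = (#|A| + 2 * #|~:A|)^k.
  rewrite (sum_prod_ffun (fun (i : 'I_k) (v : V) => if v \in A then 1 else 2)).
  rewrite prod_nat_const card_ord; congr (_ ^ _).
  rewrite (bigID (mem A)) /=; congr (_ + _).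
    rewrite -sum1_card; apply: eq_bigr => v /= ->; done.
  rewrite mulnC -sum_nat_const; apply: eq_big => v; first by rewrite inE.
  by move=> /negbTE ->.
rewrite -Hs big_distrr /= -sum_nat_const.
rewrite [X in _ <= X](bigID (fun X : {ffun 'I_k -> V} => X \in [set X | cnt X A < J])) /=.
apply: leq_trans (leq_addr _ _).
apply: leq_sum => X XJ.
have -> : \prod_(i < k) (if X i \in A then 1 else 2) = 2 ^ (\sum_(i < k) (X i \notin A)).
  rewrite expn_sum; apply: eq_bigr => i _; by case: (X i \in A).
rewrite -expnD leq_exp2l //.
move: XJ; rewrite inE => XJ.
have := cnt_compl X A; lia.
Qed.

Section Swap.
Variables (V : finType) (k : nat).
Notation ffT := {ffun 'I_k -> V}.

Definition swp (s : {ffun 'I_k -> bool}) (p : ffT * ffT) : ffT * ffT :=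
  ([ffun i => if s i then p.2 i else p.1 i], [ffun i => if s i then p.1 i else p.2 i]).

Lemma swpK s : involutive (swp s).
Proof.
case=> X Y; rewrite /swp /=; congr (_, _); apply/ffunP => i; rewrite !ffunE;
by case: (s i).
Qed.

Lemma sym_count (P : pred (ffT * ffT)) :
  #|[set p | P p]| * 2^k = \sum_(p : ffT * ffT) #|[set s | P (swp s p)]|.
Proof.
have -> : \sum_(p : ffT * ffT) #|[set s | P (swp s p)]|
    = \sum_(p : ffT * ffT) \sum_(s : {ffun 'I_k -> bool}) (P (swp s p) : nat).
  apply: eq_bigr => p _; rewrite -sum1_card big_mkcond /=.
  by apply: eq_bigr => s _; rewrite inE; case: (P _).
rewrite exchange_big /=.
have -> : \sum_(s : {ffun 'I_k -> bool}) \sum_(p : ffT * ffT) (P (swp s p) : nat)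
    = \sum_(s : {ffun 'I_k -> bool}) #|[set p | P p]|.
  apply: eq_bigr => s _.
  rewrite (reindex_inj (can_inj (swpK s))) /=.
  rewrite -sum1_card [RHS]big_mkcond /=.
  by apply: eq_bigr => p _; rewrite swpK inE; case: (P _).
by rewrite sum_nat_const cardT -cardE card_ffun card_bool card_ord mulnC.
Qed.

Lemma pow_ineq c c' R :
  c <= R -> 2 * R <= c' -> 9 ^ R * 2 ^ c * 2 ^ c' <= 3 ^ c' * 8 ^ R.
Proof.
move=> hc hc'.
have -> : c' = 2 * R + (c' - 2 * R) by lia.
set d := c' - 2 * R.
rewrite [2 ^ (_ + d)]expnD [3 ^ (_ + d)]expnD.
have e1 : 2 ^ c <= 2 ^ R by rewrite leq_exp2l.
have e2 : 2 ^ d <= 3 ^ d by elim: (d) => // d' IH; rewrite !expnS; apply: leq_mul.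
have -> : 3 ^ (2 * R) = 9 ^ R by rewrite expnM.
have -> : 2 ^ (2 * R) = 4 ^ R by rewrite expnM.
have -> : 8 ^ R = 2 ^ R * 4 ^ R by rewrite -expnMn.
apply: (@leq_trans (9 ^ R * 2 ^ R * (4 ^ R * 3 ^ d))).
  by apply: leq_mul; [apply: leq_mul | apply: leq_mul].
set a := 9 ^ R; set b := 2 ^ R; set e := 4 ^ R; set f := 3 ^ d.
have -> : a * b * (e * f) = a * f * (b * e) by lia.
done.
Qed.

End Swap.

Section Swap2.
Variables (V : finType) (k : nat).
Notation ffT := {ffun 'I_k -> V}.

Lemma swap_tail (X Y : ffT) (G : {set V}) R :
  #|[set s : {ffun 'I_k -> bool} |
      (cnt (swp s (X, Y)).1 G <= R) && (2 * R <= cnt (swp s (X, Y)).2 G)]| * 9 ^ R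
  <= 2 ^ k * 8 ^ R.
Proof.
pose u (i : 'I_k) (b : bool) := if b then Y i else X i.
pose u' (i : 'I_k) (b : bool) := if b then X i else Y i.
pose wi (i : 'I_k) (b : bool) :=
  3 ^ (u' i b \in G) * 2 ^ (u i b \notin G) * 2 ^ (u' i b \notin G).
pose w (s : {ffun 'I_k -> bool}) := \prod_(i < k) wi i (s i).
have Hsum : \sum_s w s <= 8 ^ k.
  rewrite -[X in 8 ^ X]card_ord; apply: sum_prod_ffun_le => i.
  rewrite big_bool /wi /u /u'.
  by case: (X i \in G); case: (Y i \in G).
have Hw : forall s, w s * 2 ^ cnt (swp s (X, Y)).1 G * 2 ^ cnt (swp s (X, Y)).2 G
                    = 3 ^ cnt (swp s (X, Y)).2 G * 4 ^ k.
  move=> s.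
  have e1 : forall i, (swp s (X, Y)).1 i = u i (s i) by move=> i; rewrite ffunE.
  have e2 : forall i, (swp s (X, Y)).2 i = u' i (s i) by move=> i; rewrite ffunE.
  rewrite /w /cnt !expn_sum -!big_split /=.
  rewrite -[X in _ * 4 ^ X]card_ord -prod_nat_const -big_split /=.
  apply: eq_bigr => i _; rewrite /wi e1 e2.
  by case: (u i (s i) \in G); case: (u' i (s i) \in G).
set E := [set s | _].
have HE : forall s, s \in E -> 9 ^ R * 4 ^ k <= w s * 8 ^ R.
  move=> s; rewrite inE => /andP [h1 h2].
  have := pow_ineq h1 h2.
  set c := cnt _ G; set c' := cnt _ G.
  move=> hp.
  have hpos : 0 < 2 ^ c * 2 ^ c' by rewrite muln_gt0 !expn_gt0.
  rewrite -(leq_pmul2r hpos).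
  have -> : w s * 8 ^ R * (2 ^ c * 2 ^ c') = (w s * 2 ^ c * 2 ^ c') * 8 ^ R by lia.
  rewrite Hw.
  have -> : 9 ^ R * 4 ^ k * (2 ^ c * 2 ^ c') = (9 ^ R * 2 ^ c * 2 ^ c') * 4 ^ k by lia.
  have -> : 3 ^ c' * 4 ^ k * 8 ^ R = (3 ^ c' * 8 ^ R) * 4 ^ k by lia.
  by rewrite leq_mul2r hp orbT.
have H1 : #|E| * (9 ^ R * 4 ^ k) <= 8 ^ k * 8 ^ R.
  rewrite -sum1_card big_distrl /=.
  apply: (@leq_trans (\sum_(s in E) w s * 8 ^ R)).
    by apply: leq_sum => s sE; rewrite mul1n; apply: HE.
  rewrite -big_distrl /= leq_mul2r; apply/orP; right.
  apply: leq_trans Hsum.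
  by rewrite [X in _ <= X](bigID (mem E)) /= leq_addr.
have e8 : 8 ^ k = 2 ^ k * 4 ^ k by rewrite -expnMn.
rewrite e8 in H1.
have hpos : 0 < 4 ^ k by rewrite expn_gt0.
rewrite -(leq_pmul2r hpos).
move: H1; set a := #|E|; set b := 9 ^ R; set e := 4 ^ k; set f := 2 ^ k; set g := 8 ^ R.
have -> : a * (b * e) = a * b * e by lia.
have -> : f * e * g = f * g * e by lia.
done.
Qed.

End Swap2.

Lemma pair_tail (V : finType) k (G : {set V}) R :
  #|[set p : {ffun 'I_k -> V} * {ffun 'I_k -> V} |
      (cnt p.1 G <= R) && (2 * R <= cnt p.2 G)]| * 9 ^ R
  <= (#|V| ^ k) ^ 2 * 8 ^ R.
Proof.
set P := fun p : {ffun 'I_k -> V} * {ffun 'I_k -> V} =>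
           (cnt p.1 G <= R) && (2 * R <= cnt p.2 G).
have hpos : 0 < 2 ^ k by rewrite expn_gt0.
rewrite -(leq_pmul2r hpos).
have -> : #|[set p | P p]| * 9 ^ R * 2 ^ k = #|[set p | P p]| * 2 ^ k * 9 ^ R by lia.
rewrite (sym_count P) big_distrl /=.
apply: (@leq_trans (\sum_(p : {ffun 'I_k -> V} * {ffun 'I_k -> V}) 2 ^ k * 8 ^ R)).
  apply: leq_sum => -[X Y] _; exact: (swap_tail X Y G R).
rewrite sum_nat_const cardT -cardE card_prod card_ffun card_ord -mulnn.
by rewrite [2 ^ k * _]mulnC mulnA.
Qed.

Section TT.
Variables (V : finType) (F : {set {set V}}) (t : nat).
Notation tT := {ffun 'I_t -> {set V}}.

Definition Gt (T : tT) (tau : {set 'I_t}) : {set V} :=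
  [set x | [forall i, (i \in tau) ==> (x \notin T i)]].
Definition typ (T : tT) (y : V) : {set 'I_t} := [set i | y \in T i].

Lemma count_T (x y : V) :
  #|[set T : tT | (T \in ffun_on F) && (x \in Gt T (typ T y))]|
  = #|F :\: fam_xy F x y| ^ t.
Proof.
rewrite -[X in _ ^ X]card_ord -card_ffun_on; apply: eq_card => T.
rewrite !inE; apply/andP/ffun_onP.
  move=> [/ffun_onP hF /forallP hG] i.
  have := hG i; have := hF i; rewrite /typ /fam_xy /fam_x !inE => ->.
  by case: (y \in T i); case: (x \in T i).
move=> h; split.
  by apply/ffun_onP => i; have := h i; rewrite !inE => /andP [].
apply/forallP => i; have := h i; rewrite /typ /fam_xy /fam_x !inE.
by case: (T i \in F); case: (y \in T i); case: (x \in T i).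
Qed.

Lemma markov_T k (X : {ffun 'I_k -> V}) (y : V) :
  \sum_(T in ffun_on F) cnt X (Gt T (typ T y))
  = \sum_(i < k) #|F :\: fam_xy F (X i) y| ^ t.
Proof.
rewrite /cnt exchange_big /=; apply: eq_bigr => i _.
rewrite -count_T -sum1_card [RHS]big_mkcond /= [LHS]big_mkcond /=.
apply: eq_bigr => T _; rewrite [in RHS]inE; case: (T \in ffun_on F) => //=; by case: (X i \in Gt T (typ T y)).
Qed.

End TT.

Lemma card_TT (V : finType) (F : {set {set V}}) t :
  #|[set T : {ffun 'I_t -> {set V}} | T \in ffun_on F]| = #|F| ^ t.
Proof. rewrite -[t in _ ^ t]card_ord -card_ffun_on. apply: eq_card => T. by rewrite inE. Qed.


Lemma in_Deps (V : finType) (F : {set {set V}}) e x y :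
  (y \in Deps F e x) <-> (INR #|fam_xy F x y| <= e * INR #|F|)%R.
Proof. by rewrite /Deps inE; case: Rle_dec. Qed.

Lemma D0_sub_Gt (V : finType) (F : {set {set V}}) t (T : {ffun 'I_t -> {set V}}) y :
  T \in ffun_on F -> D0 F y \subset Gt T (typ T y).
Proof.
move=> /ffun_onP hT; apply/subsetP => x /in_Deps hx.
have h0 : #|fam_xy F y x| = 0%N.
  apply/eqP; rewrite -leqn0; apply/leP; apply: INR_le; change (INR 0) with 0%R; lra.
rewrite /Gt inE; apply/forallP => i; apply/implyP; rewrite inE => yi.
apply/negP => xi.
have hin : T i \in fam_xy F y x by rewrite /fam_xy /fam_x !inE hT yi xi.
have : 0 < #|fam_xy F y x| by apply/card_gt0P; exists (T i).
by rewrite h0.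
Qed.

Theorem core (V : finType) (F : {set {set V}}) (eps : R) (k t R' : nat) :
  0 < #|F| -> 0 < #|V| ->
  (forall y, 2 ^ (2 * R') * (#|D0 F y| + 2 * #|~: D0 F y|) ^ k <= 2 ^ k * #|V| ^ k) ->
  (forall x y, y \notin Deps F eps x ->
     2 * k * #|F :\: fam_xy F x y| ^ t <= R'.+1 * #|F| ^ t) ->
  4 * 2 ^ t * 8 ^ R' < 9 ^ R' ->
  exists X : {ffun 'I_k -> V}, forall y, exists i, y \in Deps F eps (X i).
Proof.
move=> Fpos Vpos H1 H2 H3.
apply: NNPP => Hno.
have Hbad : forall X : {ffun 'I_k -> V}, exists y, forall i, y \notin Deps F eps (X i).
  move=> X; apply: NNPP => hX; apply: Hno; exists X => y.
  apply: NNPP => hy; apply: hX; exists y => i; apply/negP => hi; apply: hy; by exists i.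
set N := #|V| ^ k.
set M := #|F| ^ t.
set TT := [set T : {ffun 'I_t -> {set V}} | T \in ffun_on F].
pose ev (X Y : {ffun 'I_k -> V}) (T : {ffun 'I_t -> {set V}}) : bool :=
  [exists tau, (cnt X (Gt T tau) <= R') && (2 * R' <= cnt Y (Gt T tau))].
set S := \sum_(X : {ffun 'I_k -> V}) \sum_(Y : {ffun 'I_k -> V}) \sum_(T in TT) (ev X Y T : nat).
have cardTT : #|TT| = M by apply: card_TT.
have cardff : #|{ffun 'I_k -> V}| = N by rewrite card_ffun card_ord.
have Hlow : N * N * M <= 4 * S.
  rewrite /S big_distrr /=.
  have -> : N * N * M = \sum_(X : {ffun 'I_k -> V}) N * M.
    by rewrite sum_nat_const cardT -cardE cardff; lia.
  apply: leq_sum => X _.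
  have [y hy] := Hbad X.
  set gY := [set Y : {ffun 'I_k -> V} | 2 * R' <= cnt Y (D0 F y)].
  set gT := [set T | (T \in TT) && (cnt X (Gt T (typ T y)) <= R')].
  have HgY : N <= 2 * #|gY|.
    have hb := hit_bound (D0 F y) k (2 * R').
    set bY := [set Y : {ffun 'I_k -> V} | cnt Y (D0 F y) < 2 * R'] in hb.
    have e : #|gY| + #|bY| = N.
      rewrite -cardff -[in RHS](cardsC gY); congr (_ + _); apply: eq_card => Y.
      by rewrite !inE ltnNge.
    have := H1 y; rewrite -/N => h1.
    have hh : #|bY| * 2 ^ k.+1 <= 2 ^ k * N by exact: leq_trans hb h1.
    rewrite expnS in hh.
    move: hh e; set b := #|bY|; set p := 2 ^ k => hh e.
    have pp : 0 < p by rewrite expn_gt0.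
    have : b * 2 <= N.
      rewrite -(leq_pmul2r pp).
      have -> : b * 2 * p = b * (2 * p) by lia.
      by rewrite [N * _]mulnC.
    lia.
  have HgT : M <= 2 * #|gT|.
    set bT := [set T | (T \in TT) && (R' < cnt X (Gt T (typ T y)))].
    have e : #|gT| + #|bT| = M.
      rewrite -cardTT -(cardID (mem gT) TT); congr (_ + _); apply: eq_card => T;
      rewrite !inE.
        by case: [forall x, T x \in F]; rewrite /= ?andbb.
      by case: [forall x, T x \in F]; rewrite /= ?ltnNge ?andbT.
    have hm : \sum_(T in TT) cnt X (Gt T (typ T y))
              = \sum_(i < k) #|F :\: fam_xy F (X i) y| ^ t.
      rewrite -(markov_T F t X y); apply: eq_bigl => T; by rewrite inE.
    have hb1 : #|bT| * R'.+1 <= \sum_(T in TT) cnt X (Gt T (typ T y)).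
      rewrite -sum1_card big_distrl /=.
      apply: (@leq_trans (\sum_(T in bT) cnt X (Gt T (typ T y)))).
        by apply: leq_sum => T; rewrite inE mul1n => /andP [_].
      rewrite [X in _ <= X](bigID (mem bT)) /=.
      apply: leq_trans (leq_addr _ _).
      rewrite big_mkcond [X in _ <= X]big_mkcond /=; apply: leq_sum => T _.
      by rewrite !inE; case: [forall x, T x \in F]; rewrite /= ?andbb.
    have hb2 : 2 * \sum_(i < k) #|F :\: fam_xy F (X i) y| ^ t <= R'.+1 * M.
      case: (posnP k) => [k0|kpos].
        by rewrite big1 // => -[j hj]; exfalso; move: hj; rewrite k0.
      rewrite -(leq_pmul2l kpos).
      apply: (@leq_trans (\sum_(i < k) R'.+1 * M)); last first.
        by rewrite sum_nat_const card_ord.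
      rewrite mulnA [k * 2]mulnC big_distrr /=; apply: leq_sum => i _.
      by apply: H2; apply: hy.
    rewrite hm in hb1.
    have : 2 * #|bT| * R'.+1 <= R'.+1 * M by rewrite -mulnA; apply: leq_trans hb2; rewrite leq_mul2l hb1 orbT.
    rewrite [R'.+1 * M]mulnC leq_mul2r /= => h.
    have h2 : 2 * #|bT| <= M by exact: h.
    have e2 : #|gT| + #|bT| = M by exact: e.
    suff hs : M <= 2 * #|gT| by exact: hs.
    move: e2 h2; generalize (#|gT|) (#|bT|) M => a b c; lia.
  apply: (@leq_trans (4 * (#|gY| * #|gT|))).
    have -> : 4 * (#|gY| * #|gT|) = (2 * #|gY|) * (2 * #|gT|) by lia.
    by apply: leq_mul.
  rewrite leq_mul2l /=.
  rewrite -sum1_card big_distrl /=.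
  rewrite [X in _ <= X](bigID (mem gY)) /=; apply: leq_trans (leq_addr _ _).
  apply: leq_sum => Y hY; rewrite mul1n -sum1_card.
  rewrite [X in _ <= X](bigID (mem gT)) /=; apply: leq_trans (leq_addr _ _).
  rewrite big_mkcond [X in _ <= X]big_mkcond /=; apply: leq_sum => T _.
  case: (boolP (T \in gT)) => //= hT.
  move: (hT); rewrite inE => /andP [hTT hc]; rewrite hTT /= (_ : ev X Y T = true) //.
  have hTT2 : T \in ffun_on F by move: hTT; rewrite inE.
  apply/existsP; exists (typ T y); rewrite hc /=.
  apply: (leq_trans _ (cnt_sub Y (D0_sub_Gt y hTT2))).
  by move: hY; rewrite inE.
have Hup : S * 9 ^ R' <= M * 2 ^ t * (N ^ 2 * 8 ^ R').
  have -> : S = \sum_(T in TT) \sum_(p : {ffun 'I_k -> V} * {ffun 'I_k -> V}) (ev p.1 p.2 T : nat).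
    rewrite /S pair_big /= exchange_big /=; done.
  rewrite big_distrl /=.
  have -> : M * 2 ^ t * (N ^ 2 * 8 ^ R') = \sum_(T in TT) 2 ^ t * (N ^ 2 * 8 ^ R').
    rewrite sum_nat_const -mulnA; congr (_ * _); exact: (esym cardTT).
  apply: leq_sum => T _.
  apply: (@leq_trans ((\sum_(tau : {set 'I_t}) #|[set p : {ffun 'I_k -> V} * {ffun 'I_k -> V} |
      (cnt p.1 (Gt T tau) <= R') && (2 * R' <= cnt p.2 (Gt T tau))]|) * 9 ^ R')).
    rewrite leq_mul2r; apply/orP; right.
    have -> : \sum_(tau : {set 'I_t}) #|[set p : {ffun 'I_k -> V} * {ffun 'I_k -> V} |
      (cnt p.1 (Gt T tau) <= R') && (2 * R' <= cnt p.2 (Gt T tau))]|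
      = \sum_(p : {ffun 'I_k -> V} * {ffun 'I_k -> V}) \sum_(tau : {set 'I_t})
          ((cnt p.1 (Gt T tau) <= R') && (2 * R' <= cnt p.2 (Gt T tau)) : nat).
      rewrite exchange_big /=; apply: eq_bigr => tau _.
      rewrite -sum1_card [LHS]big_mkcond /=; apply: eq_bigr => p _.
      by rewrite inE; case: (_ && _).
    apply: leq_sum => p _.
    case: (boolP (ev p.1 p.2 T)) => // /existsP [tau htau].
    by rewrite (bigD1 tau) //= htau.
  rewrite big_distrl /=.
  have -> : 2 ^ t * (N ^ 2 * 8 ^ R') = \sum_(tau : {set 'I_t}) N ^ 2 * 8 ^ R'.
    rewrite sum_nat_const; congr (_ * _).
    by rewrite -cardsT -powersetT card_powerset cardsT card_ord.
  apply: leq_sum => tau _; exact: pair_tail.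
have NM : 0 < N * N * M by rewrite !muln_gt0 !expn_gt0 Vpos Fpos.
have : N * N * M * 9 ^ R' <= N * N * M * (4 * 2 ^ t * 8 ^ R').
  apply: (@leq_trans (4 * S * 9 ^ R')); first by rewrite leq_mul2r Hlow orbT.
  move: Hup; rewrite -mulnn.
  set a := 9 ^ R'; set b := 2 ^ t; set c := 8 ^ R'.
  move=> Hup.
  have -> : 4 * S * a = 4 * (S * a) by lia.
  have -> : N * N * M * (4 * b * c) = 4 * (M * b * (N * N * c)) by lia.
  by rewrite leq_mul2l Hup orbT.
rewrite leq_pmul2l // => h.
by move: (leq_trans H3 h); rewrite ltnn.
Qed.

Lemma INR_expn m n : INR (m ^ n) = (INR m ^ n)%R.
Proof.
elim: n => [|n IH]; first by rewrite expn0.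
by rewrite expnS mulnE mult_INR IH /=.
Qed.

Lemma INR_muln a b : INR (a * b) = (INR a * INR b)%R.
Proof. by rewrite mulnE mult_INR. Qed.

Lemma INR_addn a b : INR (a + b) = (INR a + INR b)%R.
Proof. by rewrite addnE plus_INR. Qed.

Lemma exp_pow x n : (exp x ^ n = exp (INR n * x))%R.
Proof.
elim: n => [|n IH]; first by rewrite /= Rmult_0_l exp_0.
have -> : (exp x ^ n.+1 = exp x * exp x ^ n)%R by []. rewrite IH -[n.+1]addn1 INR_addn -exp_plus; f_equal; simpl; lra.
Qed.

Lemma exp1_ge2 : (2 <= exp 1)%R.
Proof. have := exp_ineq1 1 R1_neq_R0; lra. Qed.

Lemma H3_ok t : 4 * 2 ^ t * 8 ^ (7 * t + 16) < 9 ^ (7 * t + 16).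
Proof.
apply/ltP; apply: INR_lt.
rewrite !INR_muln !INR_expn.
have e : forall x, (x ^ (7 * t + 16) = (x ^ 7) ^ t * x ^ 16)%R.
  move=> x; rewrite -pow_mult -pow_add; f_equal; lia.
rewrite !e.
have h1 : (INR 2 * INR 8 ^ 7 <= INR 9 ^ 7)%R by simpl; lra.
have h2 : (INR 4 * INR 8 ^ 16 < INR 9 ^ 16)%R by simpl; lra.
have h3 : ((INR 2 * INR 8 ^ 7) ^ t <= (INR 9 ^ 7) ^ t)%R.
  apply: pow_incr; split; last exact: h1.
  apply: Rmult_le_pos; [apply: pos_INR | apply: pow_le; apply: pos_INR].
rewrite Rpow_mult_distr in h3.
have p1 : (0 < (INR 9 ^ 7) ^ t)%R by apply: pow_lt; simpl; lra.
have p2 : (0 < INR 8 ^ 16)%R by apply: pow_lt; simpl; lra.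
set a := (INR 2 ^ t * (INR 8 ^ 7) ^ t)%R in h3.
set b := ((INR 9 ^ 7) ^ t)%R in h3 p1 *.
have : (INR 4 * (INR 2 ^ t * (INR 8 ^ 7) ^ t * INR 8 ^ 16) <= INR 4 * (b * INR 8 ^ 16))%R.
  apply: Rmult_le_compat_l; first by simpl; lra.
  apply: Rmult_le_compat_r; [lra | exact: h3].
have : (INR 4 * (b * INR 8 ^ 16) < b * INR 9 ^ 16)%R.
  rewrite -Rmult_assoc (Rmult_comm _ b) Rmult_assoc.
  apply: Rmult_lt_compat_l => //; lra.
move=> h4 h5; rewrite Rmult_assoc; lra.
Qed.

Lemma exp_le (x y : R) : (x <= y)%R -> (exp x <= exp y)%R.
Proof. case => h; [left; exact: exp_increasing | by rewrite h; right]. Qed.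

Lemma exp_ge_1px (x : R) : (1 + x <= exp x)%R.
Proof.
case: (Req_dec x 0) => [->|hx]; first by rewrite exp_0; lra.
by left; apply: exp_ineq1.
Qed.

Lemma H1_ok (n a k R' : nat) (delta : R) :
  0 < n -> a <= n -> (0 < delta)%R ->
  (delta <= INR a / INR n)%R -> (4 * INR R' <= delta * INR k)%R ->
  2 ^ (2 * R') * (a + 2 * (n - a)) ^ k <= 2 ^ k * n ^ k.
Proof.
move=> n0 an d0 hd hk.
apply/leP; apply: INR_le.
rewrite !INR_muln !INR_expn INR_addn INR_muln (minus_INR _ _ (elimT leP an)).
have N0 : (0 < INR n)%R by apply: lt_0_INR; apply/ltP.
have hA : (delta * INR n <= INR a)%R.
  have := Rmult_le_compat_r (INR n) _ _ (Rlt_le _ _ N0) hd.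
  by rewrite /Rdiv Rmult_assoc Rinv_l ?Rmult_1_r //; lra.
have hAn : (INR a <= INR n)%R by apply: le_INR; apply/leP.
set N := INR n in N0 hA hAn *; set A := INR a in hA hAn *.
have e2 : forall x, (x ^ (2 * R') = (x ^ 2) ^ R')%R.
  move=> x; rewrite -pow_mult; f_equal; lia.
rewrite e2.
have hb : (0 <= A + INR 2 * (N - A) <= INR 2 * N * exp (- (delta / 2)))%R.
  have := exp_ge_1px (- (delta / 2)); simpl => he; split; first lra.
  apply: (Rle_trans _ (2 * N * (1 + - (delta / 2)))); first nra.
  apply: Rmult_le_compat_l; lra.
have hbk := pow_incr _ _ k hb.
rewrite !Rpow_mult_distr exp_pow in hbk.
have hexp : (exp (INR k * - (delta / 2)) <= exp (-2) ^ R')%R.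
  rewrite exp_pow; apply: exp_le; nra.
have h4 : (INR 2 ^ 2 * exp (-2) <= 1)%R.
  have : (exp 2 = exp 1 * exp 1)%R by rewrite -exp_plus; f_equal; lra.
  have := exp1_ge2 => h1 h2.
  rewrite exp_Ropp h2; simpl.
  have hp : (0 < exp 1 * exp 1)%R by apply: Rmult_lt_0_compat; apply: exp_pos.
  apply: (Rmult_le_reg_r (exp 1 * exp 1)) => //.
  rewrite Rmult_assoc Rinv_l; last lra.
  nra.
have h4R : ((INR 2 ^ 2) ^ R' * exp (-2) ^ R' <= 1)%R.
  rewrite -Rpow_mult_distr -(pow1 R'); apply: pow_incr; split => //.
  apply: Rmult_le_pos; [apply: pow_le; simpl; lra | left; apply: exp_pos].
have p1 : (0 <= (INR 2 ^ 2) ^ R')%R by apply: pow_le; apply: pow_le; simpl; lra.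
have p2 : (0 <= INR 2 ^ k * N ^ k)%R
  by apply: Rmult_le_pos; apply: pow_le; [simpl; lra | lra].
apply: (Rle_trans _ ((INR 2 ^ 2) ^ R' * (INR 2 ^ k * N ^ k * exp (-2) ^ R'))).
  apply: Rmult_le_compat_l => //; apply: (Rle_trans _ _ _ hbk).
  by apply: Rmult_le_compat_l.
have -> : ((INR 2 ^ 2) ^ R' * (INR 2 ^ k * N ^ k * exp (-2) ^ R')
   = ((INR 2 ^ 2) ^ R' * exp (-2) ^ R') * (INR 2 ^ k * N ^ k))%R by ring.
rewrite -[X in (_ <= X)%R]Rmult_1_l.
by apply: Rmult_le_compat_r.
Qed.

Lemma H2_ok (m f k t R' : nat) (eps delta : R) :
  (0 < eps <= 1)%R -> (0 < delta <= 1)%R -> f <= m ->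
  ~ (INR f <= eps * INR m)%R ->
  (ln (10 / delta) <= eps * INR t)%R ->
  (INR k <= 4 * INR R' / delta + 1)%R -> 1 <= R' ->
  2 * k * (m - f) ^ t <= R'.+1 * m ^ t.
Proof.
move=> he hd fm hf ht hk R1.
apply/leP; apply: INR_le.
rewrite !INR_muln !INR_expn (minus_INR _ _ (elimT leP fm)) S_INR.
have hR1 : (1 <= INR R')%R by apply: (le_INR 1); apply/leP.
have hfm : (INR f <= INR m)%R by apply: le_INR; apply/leP.
have m0 : (0 <= INR m)%R by apply: pos_INR.
have hb : (0 <= INR m - INR f <= INR m * exp (- eps))%R.
  have := exp_ge_1px (- eps) => h; split; first lra.
  apply: (Rle_trans _ (INR m * (1 + - eps))); first nra.
  by apply: Rmult_le_compat_l.
have hbt := pow_incr _ _ t hb.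
rewrite Rpow_mult_distr exp_pow in hbt.
have hln : (exp (INR t * - eps) <= delta / 10)%R.
  have -> : (delta / 10 = exp (- ln (10 / delta)))%R.
    rewrite exp_Ropp exp_ln; last by apply: Rdiv_lt_0_compat; lra.
    field; lra.
  apply: exp_le; lra.
have hmt : (0 <= INR m ^ t)%R by apply: pow_le.
have hbt2 : ((INR m - INR f) ^ t <= INR m ^ t * (delta / 10))%R.
  apply: (Rle_trans _ _ _ hbt); by apply: Rmult_le_compat_l.
have hk2 : (INR 2 * INR k <= 10 * INR R' / delta)%R.
  have : (2 <= 2 * INR R' / delta)%R.
    apply: (Rmult_le_reg_r delta); first lra.
    rewrite /Rdiv Rmult_assoc Rinv_l; nra.
  move=> h2; simpl.
  have : (8 * INR R' / delta = 4 * (2 * INR R' / delta))%R by field; lra.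
  have : (10 * INR R' / delta = 5 * (2 * INR R' / delta))%R by field; lra.
  have : (4 * INR R' / delta = 2 * (2 * INR R' / delta))%R by field; lra.
  lra.
have hk0 : (0 <= INR 2 * INR k)%R by apply: Rmult_le_pos; apply: pos_INR.
apply: (Rle_trans _ (INR 2 * INR k * (INR m ^ t * (delta / 10)))).
  by apply: Rmult_le_compat_l.
apply: (Rle_trans _ (10 * INR R' / delta * (INR m ^ t * (delta / 10)))).
  apply: Rmult_le_compat_r => //; apply: Rmult_le_pos => //; lra.
have -> : (10 * INR R' / delta * (INR m ^ t * (delta / 10)) = INR R' * INR m ^ t)%R.
  field; lra.
apply: Rmult_le_compat_r => //; rewrite S_INR; lra.
Qed.


Lemma ln_le' (x y : R) : (0 < x)%R -> (x <= y)%R -> (ln x <= ln y)%R.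
Proof.
move=> x0 xy; case: (Rle_lt_dec (ln x) (ln y)) => // h.
have := exp_increasing _ _ h; rewrite !exp_ln; lra.
Qed.

Lemma ln2_ge : (1/2 <= ln 2)%R.
Proof.
have e : (exp (1/2) * exp (1/2) = exp 1)%R by rewrite -exp_plus; f_equal; lra.
have := exp_le_3; have := exp_pos (1/2) => p h.
have : (exp (1/2) <= 2)%R by nra.
move=> h2; rewrite -[X in (X <= _)%R]ln_exp; apply: ln_le' => //.
Qed.

Lemma ln5_le : (ln 5 <= 3)%R.
Proof.
have e : (exp 3 = exp 1 * exp 1 * exp 1)%R by rewrite -!exp_plus; f_equal; lra.
have := exp1_ge2 => h.
rewrite -[X in (_ <= X)%R]ln_exp; apply: ln_le'; first lra.
rewrite e; nra.
Qed.

Lemma INR_up (x : R) : (0 < x)%R ->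
  (x < INR (Z.to_nat (up x)) <= x + 1)%R.
Proof.
move=> x0; have [h1 h2] := archimed x.
have hz : (0 <= up x)%Z.
  apply: le_IZR; simpl; lra.
rewrite INR_IZR_INZ Z2Nat.id //; lra.
Qed.

Lemma final_bound (eps delta : R) (k t R' : nat) :
  (0 < eps <= 1)%R -> (0 < delta <= 1)%R ->
  (INR k <= 4 * INR R' / delta + 1)%R ->
  INR R' = (7 * INR t + 16)%R ->
  (INR t <= ln (10 / delta) / eps + 1)%R ->
  (INR k <= 400 * (1 / (eps * delta)) * ln (2 / delta))%R.
Proof.
move=> he hd hk hR ht.
set Lg := ln (2 / delta).
have hLg : (1/2 <= Lg)%R.
  apply: (Rle_trans _ _ _ ln2_ge); apply: ln_le'; first lra.
  apply: (Rmult_le_reg_r delta); first lra.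
  rewrite /Rdiv Rmult_assoc Rinv_l; lra.
have h10 : (ln (10 / delta) = ln 5 + Lg)%R.
  rewrite /Lg -ln_mult; [f_equal; field; lra | lra | apply: Rdiv_lt_0_compat; lra].
have h10' : (ln (10 / delta) <= 7 * Lg)%R by have := ln5_le; lra.
set u := (1 / (eps * delta))%R.
set w := (1 / delta)%R.
have hu1 : (1 <= u)%R.
  rewrite /u; apply: (Rmult_le_reg_r (eps * delta)); first nra.
  have -> : (1 / (eps * delta) * (eps * delta) = 1)%R by field; lra.
  nra.
have hwu : (w <= u)%R.
  rewrite /w /u /Rdiv !Rmult_1_l Rinv_mult.
  rewrite -[X in (X <= _)%R]Rmult_1_l; apply: Rmult_le_compat_r.
    left; apply: Rinv_0_lt_compat; lra.
  apply: (Rmult_le_reg_r eps); first lra.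
  rewrite Rinv_l; lra.
have hw0 : (0 <= w)%R by rewrite /w; left; apply: Rdiv_lt_0_compat; lra.
have eLw : (ln (10 / delta) / eps * w = ln (10 / delta) * u)%R.
  rewrite /w /u; field; lra.
have hk2 : (INR k <= (4 * INR R') * w + 1)%R.
  have -> : (4 * INR R' * w = 4 * INR R' / delta)%R by rewrite /w; field; lra.
  exact: hk.
have hR2 : (INR R' <= 7 * (ln (10 / delta) / eps) + 23)%R by lra.
have hR3 : (4 * INR R' * w <= (28 * (ln (10 / delta) / eps) + 92) * w)%R.
  apply: Rmult_le_compat_r => //; lra.
have hA : ((28 * (ln (10 / delta) / eps) + 92) * w
          = 28 * (ln (10 / delta) * u) + 92 * w)%R.
  rewrite -eLw; ring.
have hB : (ln (10 / delta) * u <= 7 * Lg * u)%R.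
  apply: Rmult_le_compat_r => //; lra.
have hC : (u <= 2 * Lg * u)%R.
  rewrite -[X in (X <= _)%R]Rmult_1_l; apply: Rmult_le_compat_r; lra.
lra.
Qed.

Theorem lemma1p2 :
  exists C : R, (0 < C)%R /\
    forall (eps delta : R), (0 < eps <= 1)%R -> (0 < delta <= 1)%R ->
    forall (V : finType) (F : {set {set V}}),
      F != set0 ->
      disj_ratio_ge F delta ->
      exists X : {set V},
        is_eps_covering F eps X /\
        (INR #|X| <= C * (1 / (eps * delta)) * ln (2 / delta))%R.
Proof.
exists 400%R; split; first lra.
move=> eps delta he hd V F F0 hdr.
have hLg : (0 <= ln (2 / delta))%R.
  rewrite -ln_1; apply: ln_le'; first lra.
  apply: (Rmult_le_reg_r delta); first lra.
  rewrite /Rdiv Rmult_assoc Rinv_l; lra.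
have hu : (0 <= 1 / (eps * delta))%R.
  left; apply: Rdiv_lt_0_compat; nra.
case: (posnP #|V|) => [V0 | Vpos].
  exists set0; split.
    apply/setP => v; exfalso.
    by move/card0_eq: V0 => /(_ v).
  rewrite cards0 /=; apply: Rmult_le_pos => //; apply: Rmult_le_pos => //; lra.
have Fpos : 0 < #|F| by rewrite card_gt0.
have hL : (0 < ln (10 / delta) / eps)%R.
  apply: Rdiv_lt_0_compat; last lra.
  rewrite -ln_1; apply: ln_increasing; first lra.
  apply: (Rmult_lt_reg_r delta); first lra.
  rewrite /Rdiv Rmult_assoc Rinv_l; lra.
set t := Z.to_nat (up (ln (10 / delta) / eps)).
have [ht1 ht2] := INR_up hL.
rewrite -/t in ht1 ht2.
set R' := 7 * t + 16.
have hR : INR R' = (7 * INR t + 16)%R.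
  by rewrite /R' INR_addn INR_muln (INR_IZR_INZ 7) (INR_IZR_INZ 16).
have hR0 : (0 < 4 * INR R' / delta)%R.
  apply: Rdiv_lt_0_compat; last lra.
  have := pos_INR t; lra.
set k := Z.to_nat (up (4 * INR R' / delta)).
have [hk1 hk2] := INR_up hR0.
rewrite -/k in hk1 hk2.
have H1 : forall y, 2 ^ (2 * R') * (#|D0 F y| + 2 * #|~: D0 F y|) ^ k <= 2 ^ k * #|V| ^ k.
  move=> y.
  have hc : #|~: D0 F y| = #|V| - #|D0 F y|.
    have := cardsC (D0 F y); lia.
  rewrite hc; apply: H1_ok => //; first exact: max_card.
    lra.
  have e : (delta * (4 * INR R' / delta) = 4 * INR R')%R by field; lra.
  rewrite -e; apply: Rmult_le_compat_l; lra.
have H2 : forall x y, y \notin Deps F eps x ->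
     2 * k * #|F :\: fam_xy F x y| ^ t <= R'.+1 * #|F| ^ t.
  move=> x y hy.
  have hsub : fam_xy F x y \subset F.
    apply/subsetP => S; rewrite /fam_xy /fam_x !inE => /andP [/andP [] //].
  rewrite cardsD (setIidPr hsub).
  apply: (@H2_ok _ _ _ _ _ eps delta) => //.
  - exact: subset_leq_card.
  - by move=> h; move/negP: hy; apply; apply/in_Deps.
  - have : (ln (10 / delta) / eps * eps = ln (10 / delta))%R by field; lra.
    have := Rmult_le_compat_r eps _ _ (Rlt_le _ _ (proj1 he)) (Rlt_le _ _ ht1).
    lra.
  - rewrite /R'; lia.
have [X hX] := core (eps := eps) Fpos Vpos H1 H2 (H3_ok t).
exists [set X i | i : 'I_k]; split.
  apply/setP => y; rewrite inE.
  have [i hi] := hX y.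
  apply/bigcupP; exists (X i) => //.
  by apply: imset_f.
apply: (Rle_trans _ (INR k)).
  apply: le_INR; apply/leP.
  by apply: leq_trans (leq_imset_card _ _) _; rewrite card_ord.
apply: (@final_bound eps delta k t R') => //.
Qed.
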